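(* Let $q>1$ and $0<u<1$. Choose $\lambda'_1=a\ge1$ with probability \[ Q(a)=\frac{\prod_{r\ge1}(1-u/q^r)\,u^{a-1}}{q^{a^2-a}(\frac uq)_a(\frac1q)_{a-1}}, \] and then define $\lambda'_2,\lambda'_3,\dots$ successively by the Markov rule that if $\lambda'_i=a$ then $\lambda'_{i+1}=b$ ($0\le b\le a$) with probability \[ K(a,b)=\frac{u^b(\frac1q)_a(\frac uq)_a}{q^{b^2}(\frac1q)_{a-b}(\frac1q)_b(\frac uq)_b}. \] Then the partition with conjugate $(\lambda'_1,\lambda'_2,\dots)$ is distributed according to $N_{u,q}$.
   Context: $(x)_i=\prod_{j=1}^i(1-x^j)$ with $(x)_0=1$; in particular $(\frac uq)_i=\prod_{j=1}^i(1-u/q^j)$. $N_{u,q}(\lambda)=\prod_{r\ge1}(1-u/q^r)\frac{u^{|\lambda|-1}(q^{\lambda'_1}-1)}{\prod_i q^{(\lambda'_i)^2}(\frac1q)_{m_i(\lambda)}}$ for partitions $\lambda$ of positive integers, where $\lambda'$ is the conjugate partition and $m_i(\lambda)$ the multiplicity of part $i$. *)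

(* Defs.v *)
From HB Require Import structures.
From mathcomp Require Import all_boot all_order all_algebra.
From mathcomp Require Import all_classical all_reals all_analysis.
Set Implicit Arguments. Unset Strict Implicit. Unset Printing Implicit Defensive.
Import Order.TTheory GRing.Theory Num.Theory.
Local Open Scope ring_scope.

Section Defs.
Variable R : realType.

Definition qpoch (x : R) (i : nat) : R := \prod_(1 <= j < i.+1) (1 - x ^+ j).

Definition qpochu (u q : R) (i : nat) : R := \prod_(1 <= j < i.+1) (1 - u / q ^+ j).

Definition infprod (u q : R) : R :=
  limn (fun n : nat => \prod_(1 <= r < n.+1) (1 - u / q ^+ r)).

Definition is_partition (la : seq nat) : bool :=
  sorted geq la && all (fun x => 0 < x)%N la.

Definition conjpart (la : seq nat) (i : nat) : nat := count (fun x => i <= x)%N la.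

Definition conjugate (la : seq nat) : seq nat :=
  [seq conjpart la i | i <- iota 1 (head 0%N la)].

Definition mult (la : seq nat) (i : nat) : nat := count (pred1 i) la.

Definition Nuq (u q : R) (la : seq nat) : R :=
  infprod u q * (u ^+ (sumn la).-1 * (q ^+ conjpart la 1 - 1)) /
  ((\prod_(1 <= i < (head 0%N la).+1) q ^+ (conjpart la i * conjpart la i)) *
   (\prod_(1 <= i < (head 0%N la).+1) qpoch q^-1 (mult la i))).

Definition Qinit (u q : R) (a : nat) : R :=
  infprod u q * u ^+ a.-1 /
  (q ^+ (a * a - a) * qpochu u q a * qpoch q^-1 a.-1).

Definition Ktrans (u q : R) (a b : nat) : R :=
  u ^+ b * qpoch q^-1 a * qpochu u q a /
  (q ^+ (b * b) * qpoch q^-1 (a - b) * qpoch q^-1 b * qpochu u q b).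

(* Probability that the chain produces lambda'_1 = c_1, ..., lambda'_k = c_k,
   followed by lambda'_{k+1} = 0 (and then 0 forever, since K(0,0) = 1):
   Q(c_1) * K(c_1,c_2) * ... * K(c_{k-1},c_k) * K(c_k,0). *)
Definition chain_prob (u q : R) (c : seq nat) : R :=
  match c with
  | [::] => 0
  | c1 :: _ =>
      Qinit u q c1 *
      \prod_(i < size c) Ktrans u q (nth 0%N c i) (nth 0%N c i.+1)
  end.

End Defs.

(* Main.v *)
Require Import Defs.
From HB Require Import structures.
From mathcomp Require Import all_boot all_order all_algebra.
From mathcomp Require Import all_classical all_reals all_analysis.
From mathcomp Require Import lra zify ring.
Import Order.TTheory GRing.Theory Num.Theory.
Local Open Scope ring_scope.

Lemma count_split (la : seq nat) i :
  conjpart la i = (mult la i + conjpart la i.+1)%N.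
Proof.
rewrite /conjpart /mult; elim: la => //= x s ->.
case: (ltngtP i x) => [h|h|->]; rewrite ?eqxx //=; try lia.
Qed.

Lemma mult_eq la i : mult la i = (conjpart la i - conjpart la i.+1)%N.
Proof. by rewrite (count_split la i) addnK. Qed.

Lemma conjpart0 la j : all (fun x => x < j)%N la -> conjpart la j = 0%N.
Proof.
rewrite /conjpart; elim: la => //= x s IH /andP[h1 h2].
by rewrite leqNgt h1 /= IH.
Qed.

Lemma sum_lt k x : (\sum_(0 <= i < k) (i < x))%N = minn x k.
Proof.
elim: k => [|k IH]; first by rewrite big_geq // minn0.
rewrite big_nat_recr //= IH; case: (ltnP k x) => h /=; lia.
Qed.

Lemma sumn_conj la k : all (fun x => x <= k)%N la ->
  sumn la = (\sum_(0 <= i < k) conjpart la i.+1)%N.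
Proof.
elim: la => [_|x s IH /andP[h1 h2]] /=.
  by rewrite big1 // => i _; rewrite /conjpart.
rewrite IH // /conjpart /= big_split /= sum_lt; congr (_ + _)%N. lia.
Qed.
Section Alg.
Variables (R : realType) (q u : R).
Hypotheses (hq : 1 < q) (hu0 : 0 < u) (hu1 : u < 1).

Lemma q0 : q != 0. Proof. have h : 0 < q by move: hq; lra. by rewrite gt_eqF. Qed.
Lemma qn0 n : q ^+ n != 0. Proof. by rewrite expf_neq0 // q0. Qed.

Lemma qpoch_neq0 n : qpoch q^-1 n != 0.
Proof.
rewrite /qpoch prodf_seq_neq0; apply/allP => j; rewrite mem_iota => /andP[j1 _] /=.
rewrite subr_eq0 eq_sym.
have hi : 0 <= q^-1 by rewrite invr_ge0; move: hq; lra.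
have hi1 : q^-1 < 1 by rewrite invf_lt1 //; move: hq; lra.
rewrite lt_eqF //. by rewrite (exprn_ilt1 _ hi hi1) -lt0n.
Qed.

Lemma qpochu_neq0 n : qpochu u q n != 0.
Proof.
rewrite /qpochu prodf_seq_neq0; apply/allP => j _ /=.
rewrite subr_eq0 eq_sym lt_eqF //.
have h1 : 1 <= q ^+ j by rewrite exprn_ege1 //; move: hq; lra.
rewrite ltr_pdivrMr; move: hu1; lra.
Qed.

Lemma qpoch0 (x : R) : qpoch x 0 = 1. Proof. by rewrite /qpoch big_geq. Qed.
Lemma qpochu0 : qpochu u q 0 = 1. Proof. by rewrite /qpochu big_geq. Qed.
Lemma qpochS (x : R) n : qpoch x n.+1 = qpoch x n * (1 - x ^+ n.+1).
Proof. by rewrite /qpoch big_nat_recr. Qed.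

Lemma tele (c : nat -> nat) k :
  \prod_(0 <= i < k) Ktrans u q (c i) (c i.+1) *
  (qpoch q^-1 (c k) * qpochu u q (c k) *
   \prod_(0 <= i < k) q ^+ (c i.+1 * c i.+1) *
   \prod_(0 <= i < k) qpoch q^-1 (c i - c i.+1)%N) =
  u ^+ (\sum_(0 <= i < k) c i.+1)%N * qpoch q^-1 (c 0%N) * qpochu u q (c 0%N).
Proof.
elim: k => [|k IH]; first by rewrite !big_geq // expr0; ring.
rewrite !big_nat_recr //= exprD.
have -> : u ^+ (\sum_(0 <= i < k) c i.+1)%N * u ^+ c k.+1 * qpoch q^-1 (c 0%N) * qpochu u q (c 0%N)
  = (u ^+ (\sum_(0 <= i < k) c i.+1)%N * qpoch q^-1 (c 0%N) * qpochu u q (c 0%N)) * u ^+ c k.+1 by ring.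
rewrite -IH /Ktrans.
have := qpoch_neq0 (c k.+1); have := qpochu_neq0 (c k.+1); have := qn0 (c k.+1 * c k.+1);
have := qpoch_neq0 (c k - c k.+1).
move=> h1 h2 h3 h4. field. by rewrite h1 h2 h3 h4.
Qed.

Lemma fin (b S : nat) (Bq Bp X : R) :
  X * (Bq * Bp) = u ^+ S * qpoch q^-1 b.+1 * qpochu u q b.+1 ->
  Bq != 0 -> Bp != 0 ->
  Qinit u q b.+1 * X = infprod u q * (u ^+ (b.+1 + S).-1 * (q ^+ b.+1 - 1)) /
     (q ^+ (b.+1 * b.+1) * Bq * Bp).
Proof.
move=> hX hBq hBp.
have -> : X = u ^+ S * qpoch q^-1 b.+1 * qpochu u q b.+1 / (Bq * Bp).
  by rewrite -hX mulfK // mulf_neq0.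
rewrite /Qinit /= qpochS.
have -> : (b.+1 * b.+1 = (b.+1 * b.+1 - b.+1) + b.+1)%N by rewrite subnK // leq_pmulr.
rewrite ?addSn /= !exprD exprVn.
have := qpoch_neq0 b; have := qpochu_neq0 b.+1; have := qn0 (b.+1 * b.+1 - b.+1); have := qn0 b.+1.
rewrite addnK. move=> h1 h2 h3 h4. field. by rewrite h1 h2 h3 h4 hBq hBp.
Qed.
End Alg.

Theorem theorem3p7 (R : realType) (q u : R) (la : seq nat) :
  1 < q -> 0 < u < 1 ->
  is_partition la -> (0 < sumn la)%N ->
  chain_prob u q (conjugate la) = Nuq u q la.
Proof.
move=> hq /andP[hu0 hu1] /andP[hs hpos] hsum.
case: la hs hpos hsum => [//|a s] hs hpos hsum.
have ha : (0 < a)%N by case/andP: hpos.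
have hall : all (fun x => x <= a)%N (a :: s).
  rewrite /= leqnn /=; apply: (order_path_min _ hs).
  by move=> y x z h1 h2; exact: leq_trans h2 h1.
set la := a :: s.
have hc0 : forall j, (a < j)%N -> conjpart la j = 0%N.
  move=> j hj; apply: conjpart0; apply: sub_all hall => x hx; exact: leq_ltn_trans hx hj.
have hnth : forall i, nth 0%N (conjugate la) i = conjpart la i.+1.
  move=> i; rewrite /conjugate; have -> : head 0%N la = a by [].
  case: (ltnP i a) => h.
    by rewrite (nth_map 0%N) ?size_iota // nth_iota // add1n.
  by rewrite nth_default ?size_map ?size_iota // hc0.
have hsize : size (conjugate la) = a by rewrite size_map size_iota.
have hc1 : (0 < conjpart la 1)%N by rewrite /conjpart /= ha.
destruct a as [|a']; first by [].
have [t Ht] : exists t, conjugate la = conjpart la 1 :: t by rewrite /conjugate /=; eexists.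
rewrite /chain_prob Ht -Ht hsize.
under eq_bigr do rewrite !hnth.
rewrite -(big_mkord xpredT (fun i => Ktrans u q (conjpart la i.+1) (conjpart la i.+2))).
have T := @tele R q u hq hu1 (fun i => conjpart la i.+1) a'.+1.
have E0 := hc0 a'.+2 (ltnSn _).
have E1 : \prod_(0 <= i < a'.+1) q ^+ (conjpart la i.+2 * conjpart la i.+2)
   = \prod_(0 <= i < a') q ^+ (conjpart la i.+2 * conjpart la i.+2).
  by rewrite big_nat_recr // E0 /= muln0 expr0 mulr1.
have E2 : (\sum_(0 <= i < a'.+1) conjpart la i.+2 = \sum_(0 <= i < a') conjpart la i.+2)%N.
  by rewrite big_nat_recr // E0 /= addn0.
rewrite E0 E1 E2 qpoch0 qpochu0 !mul1r in T.
rewrite /Nuq; have -> : head 0%N la = a'.+1 by [].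
rewrite (@sumn_conj _ _ hall) -/la.
have E3 : (\sum_(0 <= i < a'.+1) conjpart la i.+1 =
    conjpart la 1 + \sum_(0 <= i < a') conjpart la i.+2)%N by rewrite big_nat_recl.
have E4 : \prod_(1 <= i < a'.+2) q ^+ (conjpart la i * conjpart la i) =
    q ^+ (conjpart la 1 * conjpart la 1) *
    \prod_(0 <= i < a') q ^+ (conjpart la i.+2 * conjpart la i.+2).
  by rewrite big_nat_recl // big_add1.
have E5 : \prod_(1 <= i < a'.+2) qpoch q^-1 (mult la i) =
    \prod_(0 <= i < a'.+1) qpoch q^-1 (conjpart la i.+1 - conjpart la i.+2).
  by rewrite big_add1; apply: eq_bigr => i _; rewrite mult_eq.
rewrite E3 E4 E5.
move: hc1 T; case: (conjpart la 1) => [//|b] _ T.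
apply: (@fin R q u hq hu1 _ _ _ _ _ T).
  rewrite prodf_seq_neq0; apply/allP => j _ /=; exact: (@qn0 R q hq).
rewrite prodf_seq_neq0; apply/allP => j _ /=; exact: (@qpoch_neq0 R q hq).
Qed.
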